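(* Let $\mathcal T^*$ be an Aronszajn tree and let $B$ be an uncountable set of branches of $\mathcal T^*$ such that no two elements of $B$ have the same order type. Then there are incompatible elements $s,t\in\mathcal T^*$ such that both $\{b\in B:s\in b\}$ and $\{b\in B:t\in b\}$ are uncountable.
   Context: An Aronszajn tree is a tree of height $\omega_1$ all of whose levels are countable and which has no uncountable branch. A branch is a maximal linearly ordered subset. Two elements are incompatible if neither is below or equal to the other. *)

(* Defs.v *)
Set Implicit Arguments.

Definition countable_set {U : Type} (A : U -> Prop) : Prop :=
  exists f : U -> nat, forall x y, A x -> A y -> f x = f y -> x = y.

Definition well_ordered_on {U : Type} (le : U -> U -> Prop) (A : U -> Prop) : Prop :=
  (forall x, A x -> le x x) /\
  (forall x y z, A x -> A y -> A z -> le x y -> le y z -> le x z) /\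
  (forall x y, A x -> A y -> le x y -> le y x -> x = y) /\
  (forall x y, A x -> A y -> le x y \/ le y x) /\
  (forall S : U -> Prop, (forall x, S x -> A x) -> (exists x, S x) ->
     exists m, S m /\ forall x, S x -> le m x).

Definition order_iso {U V : Type} (leU : U -> U -> Prop) (A : U -> Prop)
    (leV : V -> V -> Prop) (B : V -> Prop) : Prop :=
  exists f : U -> V,
    (forall x, A x -> B (f x)) /\
    (forall y, B y -> exists x, A x /\ f x = y) /\
    (forall x y, A x -> A y -> f x = f y -> x = y) /\
    (forall x y, A x -> A y -> (leU x y <-> leV (f x) (f y))).

Definition preds {T : Type} (le : T -> T -> Prop) (t : T) : T -> Prop :=
  fun s => le s t /\ s <> t.

Definition is_tree {T : Type} (le : T -> T -> Prop) : Prop :=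
  (forall x, le x x) /\
  (forall x y z, le x y -> le y z -> le x z) /\
  (forall x y, le x y -> le y x -> x = y) /\
  (forall t, well_ordered_on le (preds le t)).

(* Countable ordinals are represented by well-orders on subsets of nat.
   The height of t is the order type of preds t; the level of t is the set
   of elements with the same height. *)
Definition countable_wo (D : nat -> Prop) (R : nat -> nat -> Prop) : Prop :=
  well_ordered_on R D.

Definition height_omega1 {T : Type} (le : T -> T -> Prop) : Prop :=
  (forall t, countable_set (preds le t)) /\
  (forall (D : nat -> Prop) (R : nat -> nat -> Prop), countable_wo D R ->
     exists t, order_iso R D le (preds le t)).

Definition level {T : Type} (le : T -> T -> Prop) (t : T) : T -> Prop :=
  fun s => order_iso le (preds le s) le (preds le t).

Definition chain {T : Type} (le : T -> T -> Prop) (b : T -> Prop) : Prop :=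
  forall x y, b x -> b y -> le x y \/ le y x.

Definition branch {T : Type} (le : T -> T -> Prop) (b : T -> Prop) : Prop :=
  chain le b /\
  forall c : T -> Prop, chain le c -> (forall x, b x -> c x) -> forall x, c x -> b x.

Definition aronszajn {T : Type} (le : T -> T -> Prop) : Prop :=
  is_tree le /\ height_omega1 le /\
  (forall t, countable_set (level le t)) /\
  (forall b, branch le b -> countable_set b).

Definition incompatible {T : Type} (le : T -> T -> Prop) (s t : T) : Prop :=
  ~ le s t /\ ~ le t s.

(* Main.v *)
Require Import Defs.
From Stdlib Require Import Classical ClassicalEpsilon FunctionalExtensionality PropExtensionality Cantor.

Lemma countable_sub {U} (A A' : U -> Prop) :
  countable_set A -> (forall x, A' x -> A x) -> countable_set A'.
Proof. intros [f Hf] H. exists f. intros; apply Hf; auto. Qed.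

Lemma countable_add {U} (A : U -> Prop) (p : U) :
  countable_set A -> countable_set (fun x => A x \/ x = p).
Proof.
  intros [f Hf].
  exists (fun x => if excluded_middle_informative (x = p) then 0 else S (f x)).
  intros x y Hx Hy.
  destruct (excluded_middle_informative (x = p)), (excluded_middle_informative (y = p));
    try congruence.
  intros E; injection E; intros; destruct Hx, Hy; try congruence. apply Hf; auto.
Qed.

Lemma countable_opt {U} (A : U -> Prop) :
  countable_set A -> countable_set (fun o => o = None \/ exists x, A x /\ o = Some x).
Proof.
  intros [f Hf].
  exists (fun o => match o with None => 0 | Some x => S (f x) end).
  intros x y [->|[a [Aa ->]]] [->|[b [Ab ->]]]; try discriminate; auto.
  intros E; injection E; intros E'. f_equal. apply Hf; auto.
Qed.

Lemma countable_fib {U V} (A : U -> Prop) (C : V -> Prop) (f : U -> V) :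
  countable_set C -> (forall x, A x -> C (f x)) ->
  (forall v, C v -> countable_set (fun x => A x /\ f x = v)) -> countable_set A.
Proof.
  intros [c Hc] HAC Hfib.
  assert (G : forall v, exists g : U -> nat, C v -> forall x y, A x -> A y -> f x = v -> f y = v -> g x = g y -> x = y).
  { intros v. destruct (classic (C v)) as [Cv|nCv].
    - destruct (Hfib v Cv) as [g Hg]. exists g. intros _ x y ? ? ? ? ?. apply Hg; auto.
    - exists (fun _ => 0). intros; contradiction. }
  set (g := fun v => proj1_sig (constructive_indefinite_description _ (G v))).
  assert (Hg : forall v, C v -> forall x y, A x -> A y -> f x = v -> f y = v -> g v x = g v y -> x = y).
  { intros v. exact (proj2_sig (constructive_indefinite_description _ (G v))). }
  exists (fun x => Cantor.to_nat (c (f x), g (f x) x)).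
  intros x y Ax Ay E.
  apply (f_equal Cantor.of_nat) in E. rewrite !Cantor.cancel_of_to in E.
  injection E; intros E2 E1.
  assert (Hf : f x = f y) by (apply Hc; auto).
  rewrite <- Hf in E2. apply (Hg (f x)); auto.
Qed.

Lemma below_chain {T} (le : T -> T -> Prop) a b x :
  is_tree le -> le a x -> le b x -> le a b \/ le b a.
Proof.
  intros [Hrefl [Htrans [Hanti Hwo]]] ax bx.
  destruct (classic (a = x)) as [->|nax]; [right; auto|].
  destruct (classic (b = x)) as [->|nbx]; [left; auto|].
  destruct (Hwo x) as [_ [_ [_ [Hlin _]]]].
  apply Hlin; split; auto.
Qed.

Lemma branch_down {T} (le : T -> T -> Prop) b x y :
  is_tree le -> branch le b -> b x -> le y x -> b y.
Proof.
  intros Ht [Hch Hmax] bx yx.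
  pose proof Ht as [Hrefl [Htrans [Hanti Hwo]]].
  assert (Hy : forall z, b z -> le z y \/ le y z).
  { intros z bz. destruct (Hch x z bx bz) as [xz|zx].
    - right. eauto.
    - apply (below_chain le z y x Ht zx yx). }
  apply (Hmax (fun z => b z \/ z = y)); [| intros; left; auto | right; auto].
  intros z1 z2 [b1|e1] [b2|e2]; subst; auto.
  destruct (Hy z2 b2); auto.
Qed.

Lemma chain_least {T} (le : T -> T -> Prop) (Z : T -> Prop) u :
  is_tree le -> (forall x y, Z x -> Z y -> le x y \/ le y x) -> Z u ->
  exists m, Z m /\ forall w, Z w -> le m w.
Proof.
  intros [Hrefl [Htrans [Hanti Hwo]]] Hch Zu.
  destruct (classic (exists w, Z w /\ preds le u w)) as [Hex|Hnex].
  - destruct (Hwo u) as [_ [_ [_ [_ Hmin]]]].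
    destruct (Hmin (fun w => Z w /\ preds le u w) (fun w H => proj2 H) Hex) as [m [[Zm pm] Hm]].
    exists m; split; auto. intros w Zw.
    destruct (classic (preds le u w)) as [pw|npw].
    + apply Hm; auto.
    + apply Htrans with u; [apply pm|].
      destruct (Hch u w Zu Zw) as [uw|wu]; auto.
      destruct (classic (w = u)) as [->|nwu]; [apply Hrefl|]. exfalso; apply npw; split; auto.
  - exists u; split; auto. intros w Zw.
    destruct (Hch u w Zu Zw) as [uw|wu]; auto.
    destruct (classic (w = u)) as [->|nwu]; [apply Hrefl|].
    exfalso; apply Hnex; exists w; split; auto; split; auto.
Qed.

Definition least_opt {T} (le : T -> T -> Prop) (Z : T -> Prop) : option T :=
  match excluded_middle_informative (exists m, Z m /\ forall w, Z w -> le m w) with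
  | left H => Some (proj1_sig (constructive_indefinite_description _ H))
  | right _ => None
  end.

Lemma least_opt_Some {T} (le : T -> T -> Prop) Z m :
  least_opt le Z = Some m -> Z m /\ forall w, Z w -> le m w.
Proof.
  unfold least_opt; destruct (excluded_middle_informative _) as [H|H]; intro E;
    [injection E; intros <-; exact (proj2_sig (constructive_indefinite_description _ H))
    | discriminate].
Qed.

Lemma least_opt_None {T} (le : T -> T -> Prop) Z :
  least_opt le Z = None -> ~ exists m, Z m /\ forall w, Z w -> le m w.
Proof.
  unfold least_opt; destruct (excluded_middle_informative _) as [H|H]; intro E;
    [discriminate | exact H].
Qed.

Lemma iso_id {T} (le : T -> T -> Prop) (P Q : T -> Prop) :
  (forall y, P y <-> Q y) -> order_iso le P le Q.
Proof.
  intros H. exists (fun x => x). split; [|split; [|split]].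
  - intros; apply H; auto.
  - intros y Qy; exists y; split; [apply H; auto | reflexivity].
  - auto.
  - intros; tauto.
Qed.

Theorem lemma4p7 (T : Type) (le : T -> T -> Prop) (B : (T -> Prop) -> Prop) :
  aronszajn le ->
  (forall b, B b -> branch le b) ->
  ~ countable_set B ->
  (forall b1 b2, B b1 -> B b2 -> order_iso le b1 le b2 -> b1 = b2) ->
  exists s t : T, incompatible le s t /\
    ~ countable_set (fun b => B b /\ b s) /\
    ~ countable_set (fun b => B b /\ b t).
Proof.
  intros [Ht [Hh [Hlev Hbr]]] HB HnB _.
  pose proof Ht as [Hrefl [Htrans [Hanti Hwo]]].
  set (U := fun t => ~ countable_set (fun b => B b /\ b t)).
  apply NNPP; intro Hneg.
  assert (Uchain : forall s t, U s -> U t -> le s t \/ le t s).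
  { intros s t Us Ut. apply NNPP; intro H'. apply Hneg. exists s, t.
    split; [split; intro; apply H'; auto | split; auto]. }
  assert (U_down : forall t u, U u -> le t u -> U t).
  { intros t u Uu tu Ct. apply Uu. apply (countable_sub _ _ Ct).
    intros b [Bb bu]. split; auto. apply (branch_down le b u t Ht (HB b Bb) bu tu). }
  assert (Ucnt : countable_set U).
  { apply NNPP; intro nU. apply nU. apply Hbr. split.
    - intros x y; apply Uchain.
    - intros c Hc HUc y cy. apply NNPP; intro nUy. apply nU.
      apply (countable_sub _ _ (proj1 Hh y)). intros u Uu.
      destruct (Hc u y (HUc u Uu) cy) as [uy|yu].
      + split; auto. intro; subst; contradiction.
      + exfalso; apply nUy; apply (U_down y u Uu yu). }
  assert (Hmin : forall x0, ~ U x0 -> exists x, ~ U x /\ le x x0 /\ forall y, preds le x y -> U y).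
  { intros x0 nU0.
    destruct (classic (exists y, preds le x0 y /\ ~ U y)) as [Hex|Hnex].
    - destruct (Hwo x0) as [_ [_ [_ [_ Hm0]]]].
      destruct (Hm0 (fun y => preds le x0 y /\ ~ U y) (fun y H => proj1 H) Hex)
        as [m [[mx0 nUm] Hm]].
      exists m. split; auto. split; [apply mx0|]. intros y [ym nym]. apply NNPP; intro nUy.
      assert (py : preds le x0 y).
      { split. apply Htrans with m; auto; apply mx0.
        intro; subst y. apply (proj2 mx0). apply Hanti; [apply mx0 | auto]. }
      apply nym. apply Hanti; auto; apply Hm; auto.
    - exists x0. split; auto; split; [apply Hrefl|]. intros y py.
      apply NNPP; intro. apply Hnex; eauto. }
  set (X := fun x => ~ U x /\ forall y, preds le x y -> U y).
  set (key := fun x => least_opt le (fun w => U w /\ ~ preds le x w)).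
  assert (KN : forall x, X x -> key x = None -> forall y, preds le x y <-> U y).
  { intros x [nUx HX] E y. split; [apply HX|]. intros Uy.
    apply NNPP; intro npy. apply (least_opt_None _ _ E).
    apply (chain_least _ _ y Ht); [|split; auto].
    intros a b [Ua _] [Ub _]; apply Uchain; auto. }
  assert (KS : forall x m, X x -> key x = Some m ->
            U m /\ forall y, preds le x y <-> U y /\ preds le m y).
  { intros x m [nUx HX] E. destruct (least_opt_Some _ _ _ E) as [[Um npm] Hl].
    split; auto. intros y. split.
    - intros py. assert (Uy : U y) by (apply HX; auto). split; auto.
      destruct (Uchain m y Um Uy) as [my|ym].
      + exfalso. apply npm. split.
        * apply Htrans with y; auto. apply py.
        * intro; subst m. contradiction.
      + split; auto. intro; subst y. contradiction.
    - intros [Uy [ym nym]]. apply NNPP; intro npy.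
      apply nym. apply Hanti; auto; apply Hl; split; auto. }
  assert (Xcnt : countable_set X).
  { apply (countable_fib X (fun o => o = None \/ exists u, U u /\ o = Some u) key).
    - apply countable_opt; auto.
    - intros x Xx. destruct (key x) as [m|] eqn:E; [right|left; auto].
      exists m; split; [exact (proj1 (KS x m Xx E)) | reflexivity].
    - intros o _. destruct (classic (exists x0, X x0 /\ key x0 = o)) as [[x0 [X0 E0]]|Hno].
      + apply (countable_sub _ _ (Hlev x0)). intros x [Xx Ex].
        unfold level. apply iso_id. intros y.
        destruct o as [m|].
        * rewrite (proj2 (KS x m Xx Ex) y), (proj2 (KS x0 m X0 E0) y). tauto.
        * rewrite (KN x Xx Ex y), (KN x0 X0 E0 y). tauto.
      + exists (fun _ => 0). intros x y Hx. exfalso; apply Hno; eauto. }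
  set (D := fun b => B b /\ exists x, b x /\ ~ U x).
  set (pick := fun b : T -> Prop =>
         match excluded_middle_informative (exists x, b x /\ X x) with
         | left H => Some (proj1_sig (constructive_indefinite_description _ H))
         | right _ => None end).
  assert (Dcnt : countable_set D).
  { apply (countable_fib D (fun o => o = None \/ exists x, X x /\ o = Some x) pick).
    - apply countable_opt; auto.
    - intros b [Bb [x0 [bx0 nU0]]]. right. unfold pick.
      destruct (excluded_middle_informative _) as [H|H].
      + eexists; split; [|reflexivity]. exact (proj2 (proj2_sig (constructive_indefinite_description _ H))).
      + exfalso. apply H. destruct (Hmin x0 nU0) as [x [nUx [xx0 Hx]]].
        exists x. split; [apply (branch_down le b x0 x Ht (HB b Bb) bx0 xx0)|split; auto].
    - intros o [->|[x [[nUx _] ->]]].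
      + exists (fun _ => 0). intros b1 b2 [[Bb [x0 [bx0 nU0]]] E].
        exfalso. unfold pick in E. destruct (excluded_middle_informative _) as [H|H].
        * discriminate.
        * apply H. destruct (Hmin x0 nU0) as [x [nUx [xx0 Hx]]].
          exists x. split; [apply (branch_down le b1 x0 x Ht (HB b1 Bb) bx0 xx0)|split; auto].
      + apply NNPP in nUx. apply (countable_sub _ _ nUx).
        intros b [[Bb _] E]. split; auto. unfold pick in E.
        destruct (excluded_middle_informative _) as [H|H]; [|discriminate].
        injection E; intros <-.
        exact (proj1 (proj2_sig (constructive_indefinite_description _ H))). }
  apply HnB. apply (countable_sub _ _ (countable_add D U Dcnt)).
  intros b Bb. destruct (classic (exists x, b x /\ ~ U x)) as [Hx|Hx].
  - left; split; auto.
  - right. apply functional_extensionality; intro y. apply propositional_extensionality.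
    split.
    + intros by_. apply NNPP; intro nUy. apply Hx; eauto.
    + destruct (HB b Bb) as [_ Hmax]. apply Hmax.
      * intros a c; apply Uchain.
      * intros z bz. apply NNPP; intro nUz. apply Hx; eauto.
Qed.
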